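(* Let $(M,\omega)$ be a Hermitian manifold with $\Lambda_\omega\partial\bar\partial\omega=0$. Then $$2\mathfrak R^{(1)}-\Theta^{(1)}\leq \Theta^{(2)}$$ as Hermitian $(1,1)$-forms on $M$. Moreover, equality holds if and only if $\omega$ is Kähler.
   Context: Write $\omega=\sqrt{-1}h_{i\bar j}dz^i\wedge d\bar z^j$ in local holomorphic coordinates. Chern curvature: $\Theta_{i\bar j k\bar \ell}=-\frac{\partial^2 h_{k\bar \ell}}{\partial z^i\partial \bar z^j}+h^{p\bar q}\frac{\partial h_{p\bar \ell}}{\partial \bar z^j}\frac{\partial h_{k\bar q}}{\partial z^i}$; first Chern-Ricci curvature $\Theta^{(1)}=\sqrt{-1}h^{k\bar\ell}\Theta_{i\bar jk\bar\ell}dz^i\wedge d\bar z^j$; second Chern-Ricci curvature $\Theta^{(2)}=\sqrt{-1}h^{k\bar\ell}\Theta_{k\bar\ell i\bar j}dz^i\wedge d\bar z^j$. The Levi-Civita connection of the underlying Riemannian metric induces a connection $\nabla^{\mathrm{LC}}$ on $T^{1,0}M$ (projection of the $\mathbb C$-linearly extended Levi-Civita connection onto $T^{1,0}M$), given by $\nabla^{\mathrm{LC}}_{\partial/\partial z^i}\frac{\partial}{\partial z^k}=\Gamma_{ik}^p\frac{\partial}{\partial z^p}$ and $\nabla^{\mathrm{LC}}_{\partial/\partial\bar z^j}\frac{\partial}{\partial z^k}=\Gamma_{\bar jk}^p\frac{\partial}{\partial z^p}$, where $\Gamma_{ij}^k=\frac12h^{k\bar\ell}\left(\frac{\partial h_{j\bar\ell}}{\partial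 z^i}+\frac{\partial h_{i\bar\ell}}{\partial z^j}\right)$ and $\Gamma_{\bar ij}^k=\frac12h^{k\bar\ell}\left(\frac{\partial h_{j\bar\ell}}{\partial\bar z^i}-\frac{\partial h_{j\bar i}}{\partial\bar z^\ell}\right)$. Its curvature has $(1,1)$-components $\mathfrak R_{i\bar jk}^\ell=-\left(\frac{\partial\Gamma^\ell_{ik}}{\partial\bar z^j}-\frac{\partial\Gamma^\ell_{\bar jk}}{\partial z^i}+\Gamma^s_{ik}\Gamma^\ell_{\bar js}-\Gamma^s_{\bar jk}\Gamma^\ell_{is}\right)$, and $\mathfrak R^{(1)}=\sqrt{-1}\mathfrak R_{i\bar jk}^kdz^i\wedge d\bar z^j$. $\Lambda_\omega$ is the adjoint of $L\phi=\omega\wedge\phi$. The inequality $A\le B$ means $B-A$ is a positive semi-definite Hermitian $(1,1)$-form. *)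

(* Defs.v *)
From HB Require Import structures.
From mathcomp Require Import all_boot all_order all_algebra.
From mathcomp Require Import all_classical all_reals all_analysis.
From mathcomp Require Import complex.
Set Implicit Arguments. Unset Strict Implicit. Unset Printing Implicit Defensive.
Import Order.TTheory GRing.Theory Num.Theory.
Import numFieldNormedType.Exports.
Local Open Scope classical_set_scope.
Local Open Scope ring_scope.
Local Open Scope complex_scope.

(* A point of an open subset of C^n is encoded by its real coordinates
   (x_1..x_n, y_1..y_n) in 'rV[R]_(n + n), with z^k = x^k + i y^k. *)
Definition rdir (R : realType) (n : nat) (j : 'I_(n + n)) : 'rV[R]_(n + n) :=
  delta_mx 0 j.

Definition pD (R : realType) (n : nat) (j : 'I_(n + n))
  (g : 'rV[R]_(n + n) -> R) : 'rV[R]_(n + n) -> R :=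
  fun p => 'D_(@rdir R n j) g p.

Definition iterD (R : realType) (n : nat) (s : seq 'I_(n + n))
  (g : 'rV[R]_(n + n) -> R) : 'rV[R]_(n + n) -> R :=
  foldr (fun j f => pD j f) g s.

Definition smooth_on (R : realType) (n : nat) (U : set 'rV[R]_(n + n))
  (g : 'rV[R]_(n + n) -> R) : Prop :=
  forall (s : seq 'I_(n + n)) (p : 'rV[R]_(n + n)), U p ->
    differentiable (iterD s g) p.

Definition cD (R : realType) (n : nat) (j : 'I_(n + n))
  (F : 'rV[R]_(n + n) -> R[i]) (p : 'rV[R]_(n + n)) : R[i] :=
  (pD j (fun q => @complex.Re R (F q)) p) +i* (pD j (fun q => @complex.Im R (F q)) p).

(* Wirtinger derivatives d/dz^k = (d/dx^k - i d/dy^k)/2, d/dzbar^k *)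
Definition dz (R : realType) (n : nat) (k : 'I_n)
  (F : 'rV[R]_(n + n) -> R[i]) : 'rV[R]_(n + n) -> R[i] :=
  fun p => (cD (lshift n k) F p - 'i * cD (rshift n k) F p) / 2%:R.

Definition dzb (R : realType) (n : nat) (k : 'I_n)
  (F : 'rV[R]_(n + n) -> R[i]) : 'rV[R]_(n + n) -> R[i] :=
  fun p => (cD (lshift n k) F p + 'i * cD (rshift n k) F p) / 2%:R.

Section Metric.
Variables (R : realType) (n : nat) (h : 'rV[R]_(n + n) -> 'M[R[i]]_n).

Definition hent (i j : 'I_n) : 'rV[R]_(n + n) -> R[i] := fun p => h p i j.

(* h^{k lbar}, characterized by sum_l h^{k lbar} h_{m lbar} = delta_{km} *)
Definition hup (k l : 'I_n) : 'rV[R]_(n + n) -> R[i] :=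
  fun p => invmx (h p) l k.

Definition Theta (i j k l : 'I_n) (p : 'rV[R]_(n + n)) : R[i] :=
  - dz i (dzb j (hent k l)) p
  + \sum_(a < n) \sum_(b < n)
      hup a b p * dzb j (hent a l) p * dz i (hent k b) p.

(* first and second Chern-Ricci curvatures (coefficient of sqrt(-1) dz^i /\ dzbar^j) *)
Definition Theta1 (i j : 'I_n) (p : 'rV[R]_(n + n)) : R[i] :=
  \sum_(k < n) \sum_(l < n) hup k l p * Theta i j k l p.

Definition Theta2 (i j : 'I_n) (p : 'rV[R]_(n + n)) : R[i] :=
  \sum_(k < n) \sum_(l < n) hup k l p * Theta k l i j p.

(* Gam i j k = Gamma_{ij}^k ; Gamb i j k = Gamma_{ibar j}^k *)
Definition Gam (i j k : 'I_n) : 'rV[R]_(n + n) -> R[i] :=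
  fun p => (1 / 2%:R) * \sum_(l < n)
     hup k l p * (dz i (hent j l) p + dz j (hent i l) p).

Definition Gamb (i j k : 'I_n) : 'rV[R]_(n + n) -> R[i] :=
  fun p => (1 / 2%:R) * \sum_(l < n)
     hup k l p * (dzb i (hent j l) p - dzb l (hent j i) p).

(* LC curvature (1,1)-components  Rc i j k l = frak R_{i jbar k}^l *)
Definition Rc (i j k l : 'I_n) (p : 'rV[R]_(n + n)) : R[i] :=
  - (dzb j (Gam i k l) p - dz i (Gamb j k l) p
     + \sum_(s < n) Gam i k s p * Gamb j s l p
     - \sum_(s < n) Gamb j k s p * Gam i s l p).

Definition R1 (i j : 'I_n) (p : 'rV[R]_(n + n)) : R[i] :=
  \sum_(k < n) Rc i j k k p.

(* coefficients of ddbar omega before antisymmetrization: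
   ddb k i l j = d_k dbar_l h_{i jbar}; then the totally antisymmetrized
   (2,2)-coefficient and its contraction with omega (= Lambda_omega up to a
   nonzero constant factor). *)
Definition ddb (k i l j : 'I_n) (p : 'rV[R]_(n + n)) : R[i] :=
  dz k (dzb l (hent i j)) p.

Definition ddbA (k i l j : 'I_n) (p : 'rV[R]_(n + n)) : R[i] :=
  ddb k i l j p - ddb i k l j p - ddb k i j l p + ddb i k j l p.

Definition Lambda_ddbar (i j : 'I_n) (p : 'rV[R]_(n + n)) : R[i] :=
  \sum_(k < n) \sum_(l < n) hup k l p * ddbA k i l j p.

End Metric.

Definition psd (R : realType) (n : nat) (a : 'I_n -> 'I_n -> R[i]) : Prop :=
  forall v : 'I_n -> R[i],
    0 <= \sum_(i < n) \sum_(j < n) a i j * v i * conjc (v j).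

Definition hermitian_metric (R : realType) (n : nat) (U : set 'rV[R]_(n + n))
  (h : 'rV[R]_(n + n) -> 'M[R[i]]_n) : Prop :=
  (forall i j : 'I_n, smooth_on U (fun p => @complex.Re R (h p i j)) /\
                      smooth_on U (fun p => @complex.Im R (h p i j))) /\
  (forall p, U p ->
     (forall i j : 'I_n, h p j i = conjc (h p i j)) /\
     (forall v : 'I_n -> R[i], (exists i, v i != 0) ->
        0 < \sum_(i < n) \sum_(j < n) h p i j * v i * conjc (v j))).

Definition Lddbar_zero (R : realType) (n : nat) (U : set 'rV[R]_(n + n))
  (h : 'rV[R]_(n + n) -> 'M[R[i]]_n) : Prop :=
  forall p, U p -> forall i j : 'I_n, Lambda_ddbar h i j p = 0.

(* omega is Kaehler on U: d omega = 0, i.e. d omega^{2,1} = 0 and d omega^{1,2} = 0 *)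
Definition kahler_on (R : realType) (n : nat) (U : set 'rV[R]_(n + n))
  (h : 'rV[R]_(n + n) -> 'M[R[i]]_n) : Prop :=
  forall p, U p -> forall i j k : 'I_n,
    dz k (hent h i j) p = dz i (hent h k j) p /\
    dzb k (hent h i j) p = dzb j (hent h i k) p.

(* Main.v *)
Require Import Defs.
From HB Require Import structures.
From mathcomp Require Import all_boot all_order all_algebra.
From mathcomp Require Import all_classical all_reals all_analysis.
From mathcomp Require Import complex.
From mathcomp Require Import ring lra.
Import Order.TTheory GRing.Theory Num.Theory.
Import numFieldNormedType.Exports.
Local Open Scope classical_set_scope.
Local Open Scope ring_scope.

Set Implicit Arguments. Unset Strict Implicit.
Section Schwarz.
Variables (R : realType) (V : normedModType R).

Lemma diff_bound (g : V -> R) p :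
 differentiable g p -> forall eps : R, 0 < eps -> exists2 d : R, 0 < d &
   forall u : V, `|u| < d -> `|g (u + p) - g p - 'd g p u| <= eps * `|u|.
Proof.
move=> /diff_locally /eqaddoP H eps e0.
have := H eps e0; move=> /nbhs_ballP [d /= d0 Hd]; exists d => // u ud.
have := Hd u; rewrite -ball_normE /= sub0r normrN => /(_ ud).
by rewrite /= opprD addrA.
Qed.

Lemma line_quot (f : V -> R) (q a : V) (t : R) :
  (fun h : R => h^-1 *: (((fun s : R => f (q + s *: a)) \o shift t) (h *: 1) - f (q + t *: a)))
  = (fun h : R => h^-1 *: ((f \o shift (q + t *: a)) (h *: a) - f (q + t *: a))).
Proof.
apply/funext => h /=; congr (_ *: (f _ - _)).
rewrite scaler1 scalerDl; by rewrite addrCA.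
Qed.

Lemma line_derivable (f : V -> R) (q a : V) (t : R) :
  derivable f (q + t *: a) a -> derivable (fun s : R => f (q + s *: a)) t 1.
Proof. by rewrite /derivable line_quot. Qed.

Lemma line_derive (f : V -> R) (q a : V) (t : R) :
  'D_1 (fun s : R => f (q + s *: a)) t = 'D_a f (q + t *: a).
Proof. by rewrite /derive line_quot. Qed.

Lemma line_is_derive (f : V -> R) (q a : V) (t : R) :
  derivable f (q + t *: a) a ->
  is_derive t 1 (fun s : R => f (q + s *: a)) ('D_a f (q + t *: a)).
Proof. by move=> H; split; [exact: line_derivable | exact: line_derive]. Qed.


Lemma line_cont (f : V -> R) (q a : V) (t : R) :
  {for (q + t *: a), continuous f} ->
  {for t, continuous (fun s : R => f (q + s *: a))}.
Proof.
move=> Hf; change (fun s : R => f (q + s *: a)) with (f \o (fun s : R => q + s *: a)).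
apply: continuous_comp => //.
apply: (@continuousD _ _ _ (cst q) (fun s : R => s *: a)).
  exact: cvg_cst.
by apply: continuousZl; exact: cvg_id.
Qed.

Lemma schwarz_half (f : V -> R) (p a b : V) (r : R) : 0 < r ->
  (forall x, `|x - p| < r -> differentiable f x) ->
  differentiable ('D_a f) p ->
  forall eps : R, 0 < eps -> exists2 d : R, 0 < d & forall s : R, 0 < s -> s < d ->
   `|(f (p + s *: b + s *: a) - f (p + s *: a) - (f (p + s *: b) - f p))
       - s ^+ 2 * 'D_b ('D_a f) p| <= s ^+ 2 * (eps * (`|b| + 2 * `|a|)).
Proof.
move=> r0 Hf Hg eps e0.
have [d0 d00 Hd0] := diff_bound Hg e0.
set K := `|a| + `|b| + 1.
have K0 : 0 < K by rewrite /K ltr_pwDr // addr_ge0.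
exists (Num.min r d0 / K); first by rewrite divr_gt0 // lt_min r0.
move=> s s0 sd.
have sK : s * K < Num.min r d0 by rewrite -ltr_pdivlMr.
have sKr : s * K < r by move: sK; rewrite lt_min => /andP[].
have sKd : s * K < d0 by move: sK; rewrite lt_min => /andP[].
have bnd : forall t, 0 <= t -> t <= s ->
    `|s *: b + t *: a| <= s * `|b| + s * `|a| /\ `|t *: a| <= s * `|a|.
  move=> t t0 ts.
  have ta : `|t *: a| <= s * `|a| by rewrite normrZ ger0_norm // ler_wpM2r.
  have sb : `|s *: b| = s * `|b| by rewrite normrZ gtr0_norm.
  split => //.
  by apply: (le_trans (ler_normD _ _)); rewrite sb lerD2l.
have n0 : 0 <= `|a| by [].
have n1 : 0 <= `|b| by [].
have bndK : forall t, 0 <= t -> t <= s -> `|s *: b + t *: a| < s * K /\ `|t *: a| < s * K.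
  move=> t t0 ts; have [h1 h2] := bnd t t0 ts; rewrite /K; split.
    by apply: (le_lt_trans h1); nra.
  by apply: (le_lt_trans h2); nra.
have Hx : forall t, 0 <= t -> t <= s ->
    differentiable f (p + s *: b + t *: a) /\ differentiable f (p + t *: a).
  move=> t t0 ts; have [h1 h2] := bndK t t0 ts; split; apply: Hf.
    have -> : p + s *: b + t *: a - p = s *: b + t *: a.
      by rewrite -[p + s *: b + t *: a]addrA addrC addrK.
    exact: lt_trans h1 _.
  have -> : p + t *: a - p = t *: a by rewrite addrAC subrr add0r.
  exact: lt_trans h2 _.
have HM := @MVT R (fun t => f (p + s *: b + t *: a) - f (p + t *: a))
  (fun t => 'D_a f (p + s *: b + t *: a) - 'D_a f (p + t *: a)) 0 s s0.
move: HM; case.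
- move=> x; rewrite in_itv /= => /andP[x0 xs].
  have [h1 h2] := Hx x (ltW x0) (ltW xs).
  have -> : (fun t => f (p + s *: b + t *: a) - f (p + t *: a)) =
     (fun t => f (p + s *: b + t *: a)) - (fun t => f (p + t *: a)) by [].
  apply: is_deriveB.
    by apply: line_is_derive; apply: diff_derivable.
  by apply: line_is_derive; apply: diff_derivable.
- apply: continuous_in_subspaceT => x; rewrite inE /= in_itv /= => /andP [x0 xs].
  have [h1 h2] := Hx x x0 xs.
  have -> : (fun t => f (p + s *: b + t *: a) - f (p + t *: a)) =
     (fun t => f (p + s *: b + t *: a)) - (fun t => f (p + t *: a)) by [].
  apply: continuousB.
    by apply: line_cont; apply: differentiable_continuous.
  by apply: line_cont; apply: differentiable_continuous.
- move=> c; rewrite in_itv /= => /andP[c0 cs].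
rewrite !scale0r !addr0 subr0 => ->.
have [h1 h2] := bnd c (ltW c0) (ltW cs).
have [k1 k2] := bndK c (ltW c0) (ltW cs).
set u1 := s *: b + c *: a.
set u2 := c *: a.
have E1 : p + s *: b + c *: a = u1 + p by rewrite -addrA addrC.
have E2 : p + c *: a = u2 + p by rewrite addrC.
have B1 := Hd0 u1 (lt_trans k1 sKd).
have B2 := Hd0 u2 (lt_trans k2 sKd).
have LE : 'd ('D_a f) p u1 = s * 'D_b ('D_a f) p + 'd ('D_a f) p u2.
  by rewrite /u1 linearD linearZ /= (deriveE b Hg).
rewrite E1 E2.
set D := 'D_b ('D_a f) p.
set e1 := 'D_a f (u1 + p) - 'D_a f p - 'd ('D_a f) p u1 in B1 *.
set e2 := 'D_a f (u2 + p) - 'D_a f p - 'd ('D_a f) p u2 in B2 *.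
have -> : ('D_a f (u1 + p) - 'D_a f (u2 + p)) * s - s ^+ 2 * D = (e1 - e2) * s.
  rewrite /e1 /e2 LE -/D; move: ('D_a f (u1 + p)) ('D_a f (u2 + p)) ('D_a f p) ('d ('D_a f) p u2) => x1 x2 x3 x4; rewrite /=; ring.
rewrite normrM (gtr0_norm s0).
have : `|e1 - e2| <= eps * (s * `|b| + s * `|a|) + eps * (s * `|a|).
  apply: (le_trans (ler_normB _ _)); apply: lerD.
    by apply: (le_trans B1); rewrite ler_wpM2l // ltW.
  by apply: (le_trans B2); rewrite ler_wpM2l // ltW.
move=> H; apply: (le_trans (ler_wpM2r (ltW s0) H)).
have : 0 <= eps * s * s by rewrite !mulr_ge0 // ltW.
rewrite expr2; nra.
Qed.

Lemma schwarz (f : V -> R) (p a b : V) (r : R) : 0 < r ->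
  (forall x, `|x - p| < r -> differentiable f x) ->
  differentiable ('D_a f) p -> differentiable ('D_b f) p ->
  'D_b ('D_a f) p = 'D_a ('D_b f) p.
Proof.
move=> r0 Hf Ha Hb.
set X := 'D_b ('D_a f) p; set Y := 'D_a ('D_b f) p.
apply/eqP; rewrite -subr_eq0 -normr_le0; apply/ler_addgt0Pr => e e0.
rewrite add0r.
have n0 : 0 <= `|a| by [].
have n1 : 0 <= `|b| by [].
set K := (`|b| + 2 * `|a|) + (`|a| + 2 * `|b|) + 1.
have K0 : 0 < K by rewrite /K ltr_pwDr // addr_ge0 // addr_ge0 // mulr_ge0.
have ep : 0 < e / K by rewrite divr_gt0.
have [d1 d10 H1] := @schwarz_half f p a b r r0 Hf Ha _ ep.
have [d2 d20 H2] := @schwarz_half f p b a r r0 Hf Hb _ ep.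
set s := Num.min d1 d2 / 2.
have dm : 0 < Num.min d1 d2 by rewrite lt_min d10 d20.
have s0 : 0 < s by rewrite divr_gt0.
have sm : s < Num.min d1 d2 by rewrite /s ltr_pdivrMr // ltr_pMr // ltr1n.
have s1 : s < d1 by move: sm; rewrite lt_min => /andP[].
have s2 : s < d2 by move: sm; rewrite lt_min => /andP[].
have {H1}H1 := H1 s s0 s1.
have {H2}H2 := H2 s s0 s2.
rewrite -/X in H1; rewrite -/Y in H2.
have E : p + s *: a + s *: b = p + s *: b + s *: a by rewrite addrAC.
rewrite E in H2.
move: H1 H2.
move: (f (p + s *: b + s *: a)) (f (p + s *: a)) (f (p + s *: b)) (f p) => x1 x2 x3 x4.
set D1 := x1 - x2 - (x3 - x4); set D2 := x1 - x3 - (x2 - x4).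
have -> : D2 = D1 by rewrite /D1 /D2; ring.
move=> H1 H2.
have H3 : `|s ^+ 2 * (X - Y)| <= s ^+ 2 * (e / K * (`|b| + 2 * `|a|)) + s ^+ 2 * (e / K * (`|a| + 2 * `|b|)).
  have -> : s ^+ 2 * (X - Y) = (D1 - s ^+ 2 * Y) - (D1 - s ^+ 2 * X) by ring.
  by apply: (le_trans (ler_normB _ _)); rewrite addrC; apply: lerD.
rewrite normrM ger0_norm ?sqr_ge0 // -mulrDr in H3.
have s20 : 0 < s ^+ 2 by rewrite exprn_gt0.
rewrite ler_pM2l // in H3.
apply: (le_trans H3).
rewrite -mulrDr -[X in _ <= X]mulr1 -mulrA ler_pM2l // ler_pdivrMl // mulr1 /K.
by rewrite lerDl.
Qed.
End Schwarz.

Section Complex.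
Variable R : realType.
Local Open Scope complex_scope.
Implicit Types x y : R[i].

Lemma ReD x y : complex.Re (x + y) = complex.Re x + complex.Re y. Proof. by case: x => a b; case: y => c d /=. Qed.
Lemma ImD x y : complex.Im (x + y) = complex.Im x + complex.Im y. Proof. by case: x => a b; case: y => c d /=. Qed.
Lemma ReN x : complex.Re (- x) = - complex.Re x. Proof. by case: x => a b /=. Qed.
Lemma ImN x : complex.Im (- x) = - complex.Im x. Proof. by case: x => a b /=. Qed.
Lemma ReM x y : complex.Re (x * y) = complex.Re x * complex.Re y - complex.Im x * complex.Im y. Proof. by case: x => a b; case: y => c d /=. Qed.
Lemma ImM x y : complex.Im (x * y) = complex.Re x * complex.Im y + complex.Im x * complex.Re y. Proof. by case: x => a b; case: y => c d /=. Qed.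
Lemma ReJ x : complex.Re (conjc x) = complex.Re x. Proof. by case: x => a b /=. Qed.
Lemma ImJ x : complex.Im (conjc x) = - complex.Im x. Proof. by case: x => a b /=. Qed.
Lemma ReV x : complex.Re (x^-1) = complex.Re x / (complex.Re x ^+ 2 + complex.Im x ^+ 2). Proof. by case: x => a b /=. Qed.
Lemma ImV x : complex.Im (x^-1) = - (complex.Im x / (complex.Re x ^+ 2 + complex.Im x ^+ 2)). Proof. by case: x => a b /=. Qed.
Lemma complex_ext x y : complex.Re x = complex.Re y -> complex.Im x = complex.Im y -> x = y.
Proof. by case: x; case: y => /= ? ? ? ? -> ->. Qed.
Lemma normc_pos x : x != 0 -> complex.Re x ^+ 2 + complex.Im x ^+ 2 != 0.
Proof.
case: x => a b /=; apply: contra => /eqP H.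
have ha : a ^+ 2 = 0 by apply/eqP; rewrite eq_le sqr_ge0 andbT -H lerDl sqr_ge0.
have hb : b ^+ 2 = 0 by apply/eqP; rewrite eq_le sqr_ge0 andbT -H lerDr sqr_ge0.
by move/eqP: ha; rewrite sqrf_eq0 => /eqP ->; move/eqP: hb; rewrite sqrf_eq0 => /eqP ->.
Qed.
End Complex.

Section Wirtinger.
Variables (R : realType) (n : nat).
Local Notation V := 'rV[R]_(n + n).
Local Open Scope complex_scope.

Definition cdv (F : V -> R[i]) (p : V) := forall j : 'I_(n + n),
  derivable (fun q => complex.Re (F q)) p (rdir R j) /\ derivable (fun q => complex.Im (F q)) p (rdir R j).

Variable p : V.

Lemma cdv_cst c : cdv (fun _ => c) p.
Proof. by move=> j; split; apply: derivable_cst. Qed.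

Lemma cdv_D F G : cdv F p -> cdv G p -> cdv (fun q => F q + G q) p.
Proof.
move=> HF HG j; have [f1 f2] := HF j; have [g1 g2] := HG j.
have -> : (fun q => complex.Re (F q + G q)) = (fun q => complex.Re (F q)) + (fun q => complex.Re (G q)).
  by apply/funext => q; rewrite ReD.
have -> : (fun q => complex.Im (F q + G q)) = (fun q => complex.Im (F q)) + (fun q => complex.Im (G q)).
  by apply/funext => q; rewrite ImD.
by split; [exact: (derivableD f1 g1) | exact: (derivableD f2 g2)].
Qed.

Lemma cdv_N F : cdv F p -> cdv (fun q => - F q) p.
Proof.
move=> HF j; have [f1 f2] := HF j.
have -> : (fun q => complex.Re (- F q)) = - (fun q => complex.Re (F q)).
  by apply/funext => q; rewrite ReN.
have -> : (fun q => complex.Im (- F q)) = - (fun q => complex.Im (F q)).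
  by apply/funext => q; rewrite ImN.
by split; [exact: (derivableN f1) | exact: (derivableN f2)].
Qed.

Lemma cdv_B F G : cdv F p -> cdv G p -> cdv (fun q => F q - G q) p.
Proof. by move=> HF HG; apply: cdv_D => //; apply: cdv_N. Qed.

Lemma cdv_M F G : cdv F p -> cdv G p -> cdv (fun q => F q * G q) p.
Proof.
move=> HF HG j; have [f1 f2] := HF j; have [g1 g2] := HG j.
have -> : (fun q => complex.Re (F q * G q)) = (fun q => complex.Re (F q)) * (fun q => complex.Re (G q))
    - (fun q => complex.Im (F q)) * (fun q => complex.Im (G q)).
  by apply/funext => q; rewrite ReM.
have -> : (fun q => complex.Im (F q * G q)) = (fun q => complex.Re (F q)) * (fun q => complex.Im (G q))
    + (fun q => complex.Im (F q)) * (fun q => complex.Re (G q)).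
  by apply/funext => q; rewrite ImM.
split.
  exact: (derivableB (derivableM f1 g1) (derivableM f2 g2)).
exact: (derivableD (derivableM f1 g2) (derivableM f2 g1)).
Qed.

Lemma cdv_J F : cdv F p -> cdv (fun q => conjc (F q)) p.
Proof.
move=> HF j; have [f1 f2] := HF j.
have -> : (fun q => complex.Re (conjc (F q))) = (fun q => complex.Re (F q)).
  by apply/funext => q; rewrite ReJ.
have -> : (fun q => complex.Im (conjc (F q))) = - (fun q => complex.Im (F q)).
  by apply/funext => q; rewrite ImJ.
by split => //; exact: (derivableN f2).
Qed.

Lemma cdv_V F : cdv F p -> F p != 0 -> cdv (fun q => (F q)^-1) p.
Proof.
move=> HF Fp0 j; have [f1 f2] := HF j.
have n0 := normc_pos Fp0.
have dn : derivable (fun q => complex.Re (F q) ^+ 2 + complex.Im (F q) ^+ 2) p (rdir R j).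
  have -> : (fun q => complex.Re (F q) ^+ 2 + complex.Im (F q) ^+ 2) =
    (fun q => complex.Re (F q)) * (fun q => complex.Re (F q)) + (fun q => complex.Im (F q)) * (fun q => complex.Im (F q)).
    by apply/funext => q; rewrite /= !expr2.
  exact: (derivableD (derivableM f1 f1) (derivableM f2 f2)).
have dv := @derivableV _ _ (fun q => complex.Re (F q) ^+ 2 + complex.Im (F q) ^+ 2) p (rdir R j) n0 dn.
have -> : (fun q => complex.Re ((F q)^-1)) = (fun q => complex.Re (F q)) *
   (fun q => (complex.Re (F q) ^+ 2 + complex.Im (F q) ^+ 2)^-1).
  by apply/funext => q; rewrite ReV.
have -> : (fun q => complex.Im ((F q)^-1)) = - ((fun q => complex.Im (F q)) *
   (fun q => (complex.Re (F q) ^+ 2 + complex.Im (F q) ^+ 2)^-1)).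
  by apply/funext => q; rewrite ImV.
by split; [exact: (derivableM f1 dv) | exact: (derivableN (derivableM f2 dv))].
Qed.

Lemma cdv_sum m (F : 'I_m -> V -> R[i]) :
  (forall i, cdv (F i) p) -> cdv (fun q => \sum_(i < m) F i q) p.
Proof.
elim: m F => [|m IH] F HF.
  have -> : (fun q => \sum_(i < 0) F i q) = (fun _ => 0).
    by apply/funext => q; rewrite big_ord0.
  exact: cdv_cst.
have -> : (fun q => \sum_(i < m.+1) F i q) =
   (fun q => \sum_(i < m) F (widen_ord (leqnSn m) i) q + F ord_max q).
  by apply/funext => q; rewrite big_ord_recr.
by apply: cdv_D => //; apply: IH.
Qed.

Lemma cdv_near F G : (\forall q \near p, F q = G q) -> cdv F p -> cdv G p.
Proof.
move=> HFG HF j; have [f1 f2] := HF j; split.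
  by apply: near_eq_derivable f1; near=> q; rewrite (near HFG q).
by apply: near_eq_derivable f2; near=> q; rewrite (near HFG q).
Unshelve. all: by end_near.
Qed.

Lemma deriveMR (f g : V -> R) x v : derivable f x v -> derivable g x v ->
  'D_v (f * g) x = f x * 'D_v g x + g x * 'D_v f x.
Proof. by move=> hf hg; rewrite deriveM. Qed.

Lemma cD_cst j c : cD j (fun _ => c) p = 0.
Proof. by rewrite /cD /pD !derive_cst. Qed.

Lemma cD_D j F G : cdv F p -> cdv G p ->
  cD j (fun q => F q + G q) p = cD j F p + cD j G p.
Proof.
move=> HF HG; have [f1 f2] := HF j; have [g1 g2] := HG j.
rewrite /cD /pD.
have -> : (fun q => complex.Re (F q + G q)) = (fun q => complex.Re (F q)) + (fun q => complex.Re (G q)).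
  by apply/funext => q; rewrite ReD.
have -> : (fun q => complex.Im (F q + G q)) = (fun q => complex.Im (F q)) + (fun q => complex.Im (G q)).
  by apply/funext => q; rewrite ImD.
by rewrite (deriveD f1 g1) (deriveD f2 g2).
Qed.

Lemma cD_N j F : cdv F p -> cD j (fun q => - F q) p = - cD j F p.
Proof.
move=> HF; have [f1 f2] := HF j.
rewrite /cD /pD.
have -> : (fun q => complex.Re (- F q)) = - (fun q => complex.Re (F q)).
  by apply/funext => q; rewrite ReN.
have -> : (fun q => complex.Im (- F q)) = - (fun q => complex.Im (F q)).
  by apply/funext => q; rewrite ImN.
by rewrite (deriveN f1) (deriveN f2).
Qed.

Lemma cD_B j F G : cdv F p -> cdv G p ->
  cD j (fun q => F q - G q) p = cD j F p - cD j G p.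
Proof. by move=> HF HG; rewrite cD_D ?cD_N //; apply: cdv_N. Qed.

Lemma cD_M j F G : cdv F p -> cdv G p ->
  cD j (fun q => F q * G q) p = cD j F p * G p + F p * cD j G p.
Proof.
move=> HF HG; have [f1 f2] := HF j; have [g1 g2] := HG j.
rewrite /cD /pD.
have -> : (fun q => complex.Re (F q * G q)) = (fun q => complex.Re (F q)) * (fun q => complex.Re (G q))
    - (fun q => complex.Im (F q)) * (fun q => complex.Im (G q)).
  by apply/funext => q; rewrite ReM.
have -> : (fun q => complex.Im (F q * G q)) = (fun q => complex.Re (F q)) * (fun q => complex.Im (G q))
    + (fun q => complex.Im (F q)) * (fun q => complex.Re (G q)).
  by apply/funext => q; rewrite ImM.
rewrite (deriveB (derivableM f1 g1) (derivableM f2 g2)).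
rewrite (deriveD (derivableM f1 g2) (derivableM f2 g1)).
rewrite (deriveMR f1 g1) (deriveMR f2 g2) (deriveMR f1 g2) (deriveMR f2 g1) /=.
move: ('D_(rdir R j) (fun q => complex.Re (F q)) p) ('D_(rdir R j) (fun q => complex.Im (F q)) p)
  ('D_(rdir R j) (fun q => complex.Re (G q)) p) ('D_(rdir R j) (fun q => complex.Im (G q)) p) => x1 x2 x3 x4.
move: (F p) (G p) => [a b] [c d] /=.
by apply: complex_ext => /=; ring.
Qed.

Lemma cD_J j F : cdv F p -> cD j (fun q => conjc (F q)) p = conjc (cD j F p).
Proof.
move=> HF; have [f1 f2] := HF j.
rewrite /cD /pD.
have -> : (fun q => complex.Re (conjc (F q))) = (fun q => complex.Re (F q)).
  by apply/funext => q; rewrite ReJ.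
have -> : (fun q => complex.Im (conjc (F q))) = - (fun q => complex.Im (F q)).
  by apply/funext => q; rewrite ImJ.
by rewrite (deriveN f2).
Qed.

Lemma cD_sum j m (F : 'I_m -> V -> R[i]) :
  (forall i, cdv (F i) p) ->
  cD j (fun q => \sum_(i < m) F i q) p = \sum_(i < m) cD j (F i) p.
Proof.
elim: m F => [|m IH] F HF.
  have -> : (fun q => \sum_(i < 0) F i q) = (fun _ => 0).
    by apply/funext => q; rewrite big_ord0.
  by rewrite cD_cst big_ord0.
have -> : (fun q => \sum_(i < m.+1) F i q) =
   (fun q => \sum_(i < m) F (widen_ord (leqnSn m) i) q + F ord_max q).
  by apply/funext => q; rewrite big_ord_recr.
rewrite cD_D //; last by apply: cdv_sum.
by rewrite IH // big_ord_recr.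
Qed.

Lemma cD_near j F G : (\forall q \near p, F q = G q) -> cD j F p = cD j G p.
Proof.
move=> HFG; rewrite /cD /pD.
rewrite (@near_eq_derive _ _ _ (fun q => complex.Re (F q)) (fun q => complex.Re (G q))); last first.
  by near=> q; rewrite (near HFG q).
rewrite (@near_eq_derive _ _ _ (fun q => complex.Im (F q)) (fun q => complex.Im (G q))) //.
by near=> q; rewrite (near HFG q).
Unshelve. all: by end_near.
Qed.

End Wirtinger.

Section Wop.
Variables (R : realType) (n : nat).
Local Notation V := 'rV[R]_(n + n).
Local Open Scope complex_scope.

Definition wop (a b : 'I_(n + n)) (c : R[i]) (F : V -> R[i]) (p : V) : R[i] :=
  (cD a F p + c * cD b F p) / 2%:R.

Lemma dz_wop k F p : dz k F p = wop (lshift n k) (rshift n k) (- 'i) F p.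
Proof. by rewrite /dz /wop mulNr. Qed.
Lemma dzb_wop k F p : dzb k F p = wop (lshift n k) (rshift n k) 'i F p.
Proof. by []. Qed.

Variables (a b : 'I_(n + n)) (c : R[i]) (p : V).

Lemma wop_cst z : wop a b c (fun _ => z) p = 0.
Proof. by rewrite /wop !cD_cst mulr0 addr0 mul0r. Qed.

Lemma wop_D F G : cdv F p -> cdv G p ->
  wop a b c (fun q => F q + G q) p = wop a b c F p + wop a b c G p.
Proof.
move=> HF HG; rewrite /wop (cD_D a HF HG) (cD_D b HF HG).
by move: (cD a F p) (cD a G p) (cD b F p) (cD b G p) => x1 x2 x3 x4; ring.
Qed.

Lemma wop_B F G : cdv F p -> cdv G p ->
  wop a b c (fun q => F q - G q) p = wop a b c F p - wop a b c G p.
Proof.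
move=> HF HG; rewrite /wop (cD_B a HF HG) (cD_B b HF HG).
by move: (cD a F p) (cD a G p) (cD b F p) (cD b G p) => x1 x2 x3 x4; ring.
Qed.

Lemma wop_M F G : cdv F p -> cdv G p ->
  wop a b c (fun q => F q * G q) p = wop a b c F p * G p + F p * wop a b c G p.
Proof.
move=> HF HG; rewrite /wop (cD_M a HF HG) (cD_M b HF HG).
by move: (cD a F p) (cD a G p) (cD b F p) (cD b G p) (F p) (G p) => x1 x2 x3 x4 x5 x6; ring.
Qed.

Lemma wop_Ml z F : cdv F p -> wop a b c (fun q => z * F q) p = z * wop a b c F p.
Proof.
move=> HF; have H1 := @wop_M (fun _ => z) F (@cdv_cst R n p z) HF.
by rewrite H1 wop_cst mul0r add0r.
Qed.

Lemma wop_sum m (F : 'I_m -> V -> R[i]) : (forall i, cdv (F i) p) ->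
  wop a b c (fun q => \sum_(i < m) F i q) p = \sum_(i < m) wop a b c (F i) p.
Proof.
move=> HF; rewrite /wop !cD_sum // mulr_sumr -big_split /= mulr_suml.
by apply: eq_bigr.
Qed.

Lemma wop_near F G : (\forall q \near p, F q = G q) -> wop a b c F p = wop a b c G p.
Proof. by move=> HFG; rewrite /wop (cD_near a HFG) (cD_near b HFG). Qed.

Lemma cdv_wop F : cdv (cD a F) p -> cdv (cD b F) p -> cdv (wop a b c F) p.
Proof.
move=> Ha Hb; rewrite /wop.
apply: (@cdv_M _ _ _ (fun q => cD a F q + c * cD b F q) (fun _ => 2%:R^-1)); last exact: cdv_cst.
exact: (cdv_D Ha (cdv_M (cdv_cst p c) Hb)).
Qed.

End Wop.

Section Smooth.
Variables (R : realType) (n : nat).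
Local Notation V := 'rV[R]_(n + n).
Local Open Scope complex_scope.

Definition csm (F : V -> R[i]) (p : V) := exists2 r : R, 0 < r &
  forall q : V, `|q - p| < r -> forall s : seq 'I_(n + n),
    differentiable (Defs.iterD s (fun x => complex.Re (F x))) q /\
    differentiable (Defs.iterD s (fun x => complex.Im (F x))) q.

Variables (F : V -> R[i]) (p : V).
Hypothesis HF : csm F p.

Lemma csm_at s : differentiable (Defs.iterD s (fun x => complex.Re (F x))) p /\
    differentiable (Defs.iterD s (fun x => complex.Im (F x))) p.
Proof. by case: HF => r r0 H; apply: H; rewrite subrr normr0. Qed.

Lemma csm_cdv : cdv F p.
Proof.
move=> j; have [h1 h2] := csm_at [::].
by split; apply: diff_derivable.
Qed.

Lemma csm_cdv_cD a : cdv (cD a F) p.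
Proof.
move=> j; have [h1 h2] := csm_at [:: a].
by split; apply: diff_derivable.
Qed.

Lemma csm_schwarz a b : cD a (cD b F) p = cD b (cD a F) p.
Proof.
case: HF => r r0 H.
have [ha1 ha2] := csm_at [:: a]; have [hb1 hb2] := csm_at [:: b].
have E1 := @schwarz R _ (fun x => complex.Re (F x)) p (rdir R b) (rdir R a) r r0
  (fun x hx => proj1 (H x hx [::])) hb1 ha1.
have E2 := @schwarz R _ (fun x => complex.Im (F x)) p (rdir R b) (rdir R a) r r0
  (fun x hx => proj2 (H x hx [::])) hb2 ha2.
by apply: complex_ext; [exact: E1 | exact: E2].
Qed.

Lemma cD_lin a (F1 F2 : V -> R[i]) (z : R[i]) : cdv F1 p -> cdv F2 p ->
  cD a (fun q => (F1 q + z * F2 q) / 2%:R) p = (cD a F1 p + z * cD a F2 p) / 2%:R.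
Proof.
move=> H1 H2.
have Hz : cdv (fun _ : V => z) p := cdv_cst p z.
have Hh : cdv (fun _ : V => 2%:R^-1 : R[i]) p := cdv_cst p _.
have Hzm : cdv (fun q => z * F2 q) p := cdv_M Hz H2.
have Hs : cdv (fun q => F1 q + z * F2 q) p := cdv_D H1 Hzm.
rewrite (cD_M a Hs Hh) (cD_D a H1 Hzm) (cD_M a Hz H2) !cD_cst.
move: (cD a F1 p) (cD a F2 p) (F1 p) (F2 p) => x1 x2 x3 x4.
by ring.
Qed.

Lemma wopE a b z G : wop a b z G p = (cD a G p + z * cD b G p) / 2%:R.
Proof. by []. Qed.

Lemma cD_wop a a' b' z : cD a (wop a' b' z F) p =
  (cD a (cD a' F) p + z * cD a (cD b' F) p) / 2%:R.
Proof. exact: (cD_lin a z (csm_cdv_cD a') (csm_cdv_cD b')). Qed.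

Lemma csm_wop_swap a1 b1 c1 a2 b2 c2 :
  wop a1 b1 c1 (wop a2 b2 c2 F) p = wop a2 b2 c2 (wop a1 b1 c1 F) p.
Proof.
rewrite [LHS]wopE [RHS]wopE !cD_wop.
rewrite (csm_schwarz a1 a2) (csm_schwarz a1 b2) (csm_schwarz b1 a2) (csm_schwarz b1 b2).
move: (cD a2 (cD a1 F) p) (cD b2 (cD a1 F) p) (cD a2 (cD b1 F) p) (cD b2 (cD b1 F) p).
by move=> x1 x2 x3 x4; ring.
Qed.

End Smooth.

Section Alg.
Variables (K : numFieldType) (n : nat).
Variables (G : 'I_n -> 'I_n -> K) (A B : 'I_n -> 'I_n -> 'I_n -> K)
  (C : 'I_n -> 'I_n -> 'I_n -> 'I_n -> K).

Definition ThF i j k l := - C k l i j + \sum_(a < n) \sum_(b < n) G a b * B a l j * A k b i.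
Definition Th1F i j := \sum_(k < n) \sum_(l < n) G k l * ThF i j k l.
Definition Th2F i j := \sum_(k < n) \sum_(l < n) G k l * ThF k l i j.
Definition GamF i j k := (1 / 2%:R) * \sum_(l < n) G k l * (A j l i + A i l j).
Definition GambF i j k := (1 / 2%:R) * \sum_(l < n) G k l * (B j l i - B j i l).
Definition dGz i k l := - \sum_(a < n) \sum_(m < n) G k a * A m a i * G m l.
Definition dGzb j k l := - \sum_(a < n) \sum_(m < n) G k a * B m a j * G m l.
Definition dzbGamF j i k l := (1 / 2%:R) * \sum_(m < n)
  (dGzb j l m * (A k m i + A i m k) + G l m * (C k m i j + C i m k j)).
Definition dzGambF i j k l := (1 / 2%:R) * \sum_(m < n)
  (dGz i l m * (B k m j - B k j m) + G l m * (C k m i j - C k j i m)).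
Definition RcF i j k l := - (dzbGamF j i k l - dzGambF i j k l
  + \sum_(s < n) GamF i k s * GambF j s l - \sum_(s < n) GambF j k s * GamF i s l).
Definition R1F i j := \sum_(k < n) RcF i j k k.
Definition LamF i j := \sum_(k < n) \sum_(l < n)
  G k l * (C i j k l - C k j i l - C i l k j + C k l i j).
Definition QF i j := \sum_(k < n) \sum_(l < n) \sum_(q < n) \sum_(m < n)
  G k l * G q m * (A k m i - A i m k) * (B q l j - B q j l).

Lemma sum4_perm (F : 'I_n -> 'I_n -> 'I_n -> 'I_n -> K) :
  \sum_(k < n) \sum_(m < n) \sum_(a < n) \sum_(b < n) F k m a b =
  \sum_(b < n) \sum_(m < n) \sum_(k < n) \sum_(a < n) F k m a b.
Proof.
rewrite exchange_big /=.
under eq_bigr => m _ do under eq_bigr => k _ do rewrite exchange_big /=.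
under eq_bigr => m _ do rewrite exchange_big /=.
by rewrite exchange_big.
Qed.

Variables i j : 'I_n.
Let q1 := \sum_(k < n) \sum_(l < n) \sum_(q < n) \sum_(m < n) G k l * G q m * A k m i * B q l j.
Let q2 := \sum_(k < n) \sum_(l < n) \sum_(q < n) \sum_(m < n) G k l * G q m * A k m i * B q j l.
Let q3 := \sum_(k < n) \sum_(l < n) \sum_(q < n) \sum_(m < n) G k l * G q m * A i m k * B q l j.
Let q4 := \sum_(k < n) \sum_(l < n) \sum_(q < n) \sum_(m < n) G k l * G q m * A i m k * B q j l.
Let n1 := \sum_(k < n) \sum_(l < n) G k l * C i j k l.
Let n2 := \sum_(k < n) \sum_(l < n) G k l * C k j i l.
Let n3 := \sum_(k < n) \sum_(l < n) G k l * C i l k j.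
Let n4 := \sum_(k < n) \sum_(l < n) G k l * C k l i j.

Lemma Th1F_E : Th1F i j = q1 - n4.
Proof.
rewrite /Th1F /q1 /n4 -sumrB; apply: eq_bigr => k _; rewrite -sumrB.
apply: eq_bigr => l _; rewrite /ThF mulrDr mulrN addrC; congr (_ - _).
rewrite mulr_sumr; apply: eq_bigr => a _; rewrite mulr_sumr; apply: eq_bigr => b _.
ring.
Qed.

Lemma Th2F_E : Th2F i j = q4 - n1.
Proof.
rewrite /Th2F /q4 /n1 -sumrB; apply: eq_bigr => k _; rewrite -sumrB.
apply: eq_bigr => l _; rewrite /ThF mulrDr mulrN addrC; congr (_ - _).
rewrite mulr_sumr; apply: eq_bigr => a _; rewrite mulr_sumr; apply: eq_bigr => b _.
ring.
Qed.

Lemma QF_E : QF i j = q1 - q2 - q3 + q4.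
Proof.
rewrite /QF /q1 /q2 /q3 /q4 -!sumrB -big_split /=; apply: eq_bigr => k _.
rewrite -!sumrB -big_split /=; apply: eq_bigr => l _.
rewrite -!sumrB -big_split /=; apply: eq_bigr => q _.
rewrite -!sumrB -big_split /=; apply: eq_bigr => m _.
by ring.
Qed.

Lemma LamF_E : LamF i j = n1 - n2 - n3 + n4.
Proof.
rewrite /LamF /n1 /n2 /n3 /n4 -!sumrB -big_split /=; apply: eq_bigr => k _.
rewrite -!sumrB -big_split /=; apply: eq_bigr => l _.
by ring.
Qed.

Lemma P34 : \sum_(k < n) \sum_(s < n) GamF i k s * GambF j s k =
            \sum_(k < n) \sum_(s < n) GambF j k s * GamF i s k.
Proof.
rewrite exchange_big /=; apply: eq_bigr => k _; apply: eq_bigr => s _.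
by rewrite mulrC.
Qed.

Lemma T1 : \sum_(k < n) \sum_(m < n) dGzb j k m * A k m i = - q1.
Proof.
rewrite /q1 -sumrN; apply: eq_bigr => k _.
have -> : \sum_(m < n) dGzb j k m * A k m i =
  \sum_(m < n) \sum_(a < n) \sum_(b < n) - (G k a * B b a j * G b m * A k m i).
  apply: eq_bigr => m _; rewrite /dGzb mulNr mulr_suml -sumrN; apply: eq_bigr => a _.
  by rewrite mulr_suml -sumrN; apply: eq_bigr => b _.
rewrite exchange_big /=.
under eq_bigr => a _ do rewrite exchange_big /=.
rewrite -sumrN; apply: eq_bigr => a _; rewrite -sumrN; apply: eq_bigr => b _.
rewrite -sumrN; apply: eq_bigr => m _.
by congr (- _); ring.
Qed.

Lemma T2 : \sum_(k < n) \sum_(m < n) dGzb j k m * A i m k = - q3.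
Proof.
rewrite /q3 -sumrN; apply: eq_bigr => k _.
have -> : \sum_(m < n) dGzb j k m * A i m k =
  \sum_(m < n) \sum_(a < n) \sum_(b < n) - (G k a * B b a j * G b m * A i m k).
  apply: eq_bigr => m _; rewrite /dGzb mulNr mulr_suml -sumrN; apply: eq_bigr => a _.
  by rewrite mulr_suml -sumrN; apply: eq_bigr => b _.
rewrite exchange_big /=.
under eq_bigr => a _ do rewrite exchange_big /=.
rewrite -sumrN; apply: eq_bigr => a _; rewrite -sumrN; apply: eq_bigr => b _.
rewrite -sumrN; apply: eq_bigr => m _.
by congr (- _); ring.
Qed.

Lemma T3 : \sum_(k < n) \sum_(m < n) dGz i k m * B k m j = - q1.
Proof.
have -> : \sum_(k < n) \sum_(m < n) dGz i k m * B k m j =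
  - \sum_(k < n) \sum_(m < n) \sum_(a < n) \sum_(b < n) G k a * A b a i * G b m * B k m j.
  rewrite -sumrN; apply: eq_bigr => k _; rewrite -sumrN; apply: eq_bigr => m _.
  rewrite /dGz mulNr mulr_suml; congr (- _); apply: eq_bigr => a _.
  by rewrite mulr_suml.
rewrite sum4_perm /q1; congr (- _).
apply: eq_bigr => b _; apply: eq_bigr => m _; apply: eq_bigr => k _; apply: eq_bigr => a _.
by ring.
Qed.

Lemma T4 : \sum_(k < n) \sum_(m < n) dGz i k m * B k j m = - q2.
Proof.
have -> : \sum_(k < n) \sum_(m < n) dGz i k m * B k j m =
  - \sum_(k < n) \sum_(m < n) \sum_(a < n) \sum_(b < n) G k a * A b a i * G b m * B k j m.
  rewrite -sumrN; apply: eq_bigr => k _; rewrite -sumrN; apply: eq_bigr => m _.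
  rewrite /dGz mulNr mulr_suml; congr (- _); apply: eq_bigr => a _.
  by rewrite mulr_suml.
rewrite sum4_perm /q2; congr (- _).
apply: eq_bigr => b _; apply: eq_bigr => m _; apply: eq_bigr => k _; apply: eq_bigr => a _.
by ring.
Qed.

Lemma sum2_lin6 (F1 F2 F3 F4 F5 F6 : 'I_n -> 'I_n -> K) :
  \sum_(k < n) \sum_(m < n) (F1 k m + F2 k m - F3 k m + F4 k m + F5 k m + F6 k m) =
  \sum_(k < n) \sum_(m < n) F1 k m + \sum_(k < n) \sum_(m < n) F2 k m
  - \sum_(k < n) \sum_(m < n) F3 k m + \sum_(k < n) \sum_(m < n) F4 k m
  + \sum_(k < n) \sum_(m < n) F5 k m + \sum_(k < n) \sum_(m < n) F6 k m.
Proof.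
under eq_bigr do rewrite !big_split /= sumrN.
by rewrite !big_split /= sumrN.
Qed.

Lemma P12 : \sum_(k < n) (dzbGamF j i k k - dzGambF i j k k) =
  (1 / 2%:R) * (n2 + n3 - q2 - q3).
Proof.
have -> : \sum_(k < n) (dzbGamF j i k k - dzGambF i j k k) =
  (1 / 2%:R) * \sum_(k < n) \sum_(m < n) (dGzb j k m * A k m i + dGzb j k m * A i m k
     - dGz i k m * B k m j + dGz i k m * B k j m + G k m * C i m k j + G k m * C k j i m).
  rewrite mulr_sumr; apply: eq_bigr => k _.
  rewrite /dzbGamF /dzGambF -mulrBr; congr (_ * _).
  rewrite -sumrB; apply: eq_bigr => m _.
  by ring.
rewrite sum2_lin6 T1 T2 T3 T4; congr (_ * _); rewrite -/n3 -/n2; ring.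
Qed.

Lemma identity : Th2F i j - (2%:R * R1F i j - Th1F i j) = QF i j - LamF i j.
Proof.
have HR : R1F i j = - (1 / 2%:R) * (n2 + n3 - q2 - q3).
  rewrite /R1F /RcF sumrN.
  have -> : \sum_(k < n) (dzbGamF j i k k - dzGambF i j k k
     + \sum_(s < n) GamF i k s * GambF j s k - \sum_(s < n) GambF j k s * GamF i s k)
     = \sum_(k < n) (dzbGamF j i k k - dzGambF i j k k)
     + (\sum_(k < n) \sum_(s < n) GamF i k s * GambF j s k
        - \sum_(k < n) \sum_(s < n) GambF j k s * GamF i s k).
    by rewrite -sumrB -big_split /=; apply: eq_bigr => k _; rewrite addrA.
  by rewrite P34 subrr addr0 P12 mulNr.
rewrite HR Th1F_E Th2F_E QF_E LamF_E.
have h2 : (2%:R : K) != 0 by rewrite pnatr_eq0.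
by field.
Qed.

End Alg.

Import Num.Def.
Section Spectral.
Local Open Scope sesquilinear_scope.
Variables (C : numClosedFieldType) (n : nat) (H : 'M[C]_n).
Hypothesis Hherm : forall i j, H j i = conjC (H i j).
Hypothesis Hpd : forall v : 'I_n -> C, (exists i, v i != 0) ->
  0 < \sum_(i < n) \sum_(j < n) H i j * v i * conjC (v j).

Lemma H_tc : H ^t* = H.
Proof. by apply/matrixP => i j; rewrite !mxE Hherm conjCK. Qed.

Lemma H_normal : H \is normalmx.
Proof. by apply/normalmxP; rewrite H_tc. Qed.

Let P := spectralmx H.
Let d := spectral_diag H.
Let HP : H = invmx P *m diag_mx d *m P.
Proof. exact: (elimT (@orthomx_spectralP C n H) H_normal). Qed.
Let Pu : P \is unitarymx. Proof. exact: spectral_unitarymx. Qed.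
Let PPt : P *m P ^t* = 1%:M. Proof. exact/unitarymxP. Qed.
Let PtP : P ^t* *m P = 1%:M.
Proof. by rewrite -invmx_unitary // mulVmx // unitarymx_unit. Qed.
Let HP' : H = P ^t* *m diag_mx d *m P.
Proof. by rewrite {1}HP invmx_unitary. Qed.

Lemma d_pos a : 0 < d 0 a.
Proof.
have E : P *m H *m P ^t* = diag_mx d.
  by rewrite HP' !mulmxA PPt mul1mx -mulmxA PPt mulmx1.
have -> : d 0 a = (P *m H *m P ^t*) a a by rewrite E mxE eqxx mulr1n.
have -> : (P *m H *m P ^t*) a a = \sum_(i < n) \sum_(j < n) H i j * P a i * conjC (P a j).
  rewrite mxE; under eq_bigr => j _ do rewrite mxE mulr_suml.
  rewrite exchange_big /=; apply: eq_bigr => i _; apply: eq_bigr => j _.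
  by rewrite !mxE; ring.
apply: Hpd; apply/existsP.
case: (boolP [exists x, P a x != 0]) => // Hne; exfalso.
move: Hne; rewrite negb_exists => /forallP Hz.
have : (P *m P ^t*) a a = 1 by rewrite PPt mxE eqxx.
rewrite mxE big1 ?(@oner_eq0 C) //.
  by move=> /eqP; rewrite eq_sym oner_eq0.
by move=> i _; move: (Hz i); rewrite negbK => /eqP ->; rewrite mul0r.
Qed.

Let e := \row_(a < n) (d 0 a)^-1.
Let Y := P ^t* *m diag_mx e *m P.

Let HY : H *m Y = 1%:M.
Proof.
have De : diag_mx d *m diag_mx e = 1%:M.
  apply/matrixP => a b; rewrite mul_diag_mx !mxE.
  case: (eqVneq a b) => [->|ab]; last by rewrite mulr0n mulr0.
  by rewrite !mulr1n mulfV // gt_eqF ?d_pos.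
rewrite HP' /Y !mulmxA -[_ *m P *m P ^t*]mulmxA PPt mulmx1.
by rewrite -[_ *m diag_mx d *m diag_mx e]mulmxA De mulmx1 PtP.
Qed.

Lemma H_unit : H \in unitmx.
Proof. by case: (mulmx1_unit HY). Qed.

Lemma invH_E : invmx H = Y.
Proof. by rewrite -[invmx H]mulmx1 -HY mulmxA mulVmx ?H_unit // mul1mx. Qed.

Definition Phi (S : 'I_n -> 'I_n -> C) :=
  \sum_(k < n) \sum_(l < n) \sum_(q < n) \sum_(m < n)
    invmx H l k * invmx H m q * S k m * conjC (S l q).

Lemma Phi_tr (S : 'I_n -> 'I_n -> C) (Sm := \matrix_(k, m) S k m) :
  Phi S = \tr (invmx H *m Sm *m invmx H *m Sm ^t*).
Proof.
rewrite /Phi /mxtrace.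
have -> : \sum_(i < n) (invmx H *m Sm *m invmx H *m Sm ^t*) i i =
  \sum_(l < n) \sum_(q < n) \sum_(m < n) \sum_(k < n)
    invmx H l k * invmx H m q * S k m * conjC (S l q).
  apply: eq_bigr => l _; rewrite mxE; apply: eq_bigr => q _.
  rewrite !mxE mulr_suml; apply: eq_bigr => m _; rewrite !mxE !mulr_suml.
  by apply: eq_bigr => k _; rewrite !mxE; ring.
rewrite exchange_big /=; apply: eq_bigr => l _.
rewrite exchange_big /=; apply: eq_bigr => q _.
by rewrite exchange_big.
Qed.

Lemma Phi_diag (S : 'I_n -> 'I_n -> C) (Sm := \matrix_(k, m) S k m)
  (Z := P *m Sm *m P ^t*) :
  Phi S = \sum_(a < n) \sum_(b < n) (e 0 a * e 0 b) * (Z a b * conjC (Z a b)).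
Proof.
rewrite Phi_tr invH_E /Y.
have -> : P ^t* *m diag_mx e *m P *m Sm *m (P ^t* *m diag_mx e *m P) *m Sm ^t* =
  P ^t* *m (diag_mx e *m Z *m diag_mx e *m P *m Sm ^t*).
  by rewrite /Z !mulmxA.
rewrite mxtrace_mulC.
have -> : diag_mx e *m Z *m diag_mx e *m P *m Sm ^t* *m P ^t* =
    diag_mx e *m Z *m diag_mx e *m Z ^t*.
  by rewrite /Z !trmx_mul !map_mxM trmxCK !mulmxA.
rewrite /mxtrace; apply: eq_bigr => a _.
rewrite mxE; apply: eq_bigr => b _.
rewrite mul_mx_diag mul_diag_mx !mxE.
by ring.
Qed.

Lemma e_pos a : 0 < e 0 a.
Proof. by rewrite mxE invr_gt0 d_pos. Qed.

Lemma Phi_ge0 S : 0 <= Phi S.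
Proof.
rewrite Phi_diag; apply: sumr_ge0 => a _; apply: sumr_ge0 => b _.
by apply: mulr_ge0; [apply: mulr_ge0; apply: ltW; apply: e_pos | apply: mul_conjC_ge0].
Qed.

Lemma Phi_eq0 S : Phi S = 0 -> forall k m, S k m = 0.
Proof.
set Sm := \matrix_(k, m) S k m.
set Z := P *m Sm *m P ^t*.
rewrite Phi_diag -/Sm -/Z => H0.
have Hterm : forall a b, e 0 a * e 0 b * (Z a b * conjC (Z a b)) = 0.
  move=> a b.
  have Ha : \sum_(b < n) e 0 a * e 0 b * (Z a b * conjC (Z a b)) = 0.
    apply: (psumr_eq0P _ H0) => // a' _.
    apply: sumr_ge0 => b' _.
    by apply: mulr_ge0; [apply: mulr_ge0; apply: ltW; apply: e_pos | apply: mul_conjC_ge0].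
  apply: (psumr_eq0P _ Ha) => // b' _.
  by apply: mulr_ge0; [apply: mulr_ge0; apply: ltW; apply: e_pos | apply: mul_conjC_ge0].
have Z0 : Z = 0.
  apply/matrixP => a b; rewrite [RHS]mxE.
  have := Hterm a b; move/eqP.
  rewrite mulf_eq0 mulf_eq0 (gt_eqF (e_pos a)) (gt_eqF (e_pos b)) /=.
  by rewrite mul_conjC_eq0 => /eqP.
have : Sm = P ^t* *m Z *m P by rewrite /Z !mulmxA PtP mul1mx -mulmxA PtP mulmx1.
rewrite Z0 mulmx0 mul0mx => S0 k m.
by have := congr1 (fun M : 'M[C]_n => M k m) S0; rewrite /Sm !mxE.
Qed.

End Spectral.

Section Aux.
Variables (K : numFieldType) (n : nat).

Lemma inv_deriv (G H : 'I_n -> 'I_n -> K) (A' : 'I_n -> 'I_n -> K) (D : 'I_n -> K) (k : 'I_n) :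
  (forall l l', \sum_(m < n) G m l' * H m l = (l == l')%:R) ->
  (forall m, \sum_(l < n) (A' m l * G k l + H m l * D l) = 0) ->
  forall l', D l' = - \sum_(a < n) \sum_(m < n) G k a * A' m a * G m l'.
Proof.
move=> HGH HA l'.
have -> : D l' = \sum_(l < n) (l == l')%:R * D l.
  rewrite (bigD1 l') //= eqxx mul1r big1 ?addr0 // => l /negbTE ->.
  by rewrite mul0r.
have -> : \sum_(l < n) (l == l')%:R * D l = \sum_(m < n) G m l' * \sum_(l < n) H m l * D l.
  under eq_bigr => l _ do rewrite -HGH mulr_suml.
  rewrite exchange_big /=; apply: eq_bigr => m _; rewrite mulr_sumr.
  by apply: eq_bigr => l _; rewrite mulrA.
have HD : forall m, \sum_(l < n) H m l * D l = - \sum_(l < n) A' m l * G k l.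
  move=> m; apply/eqP; rewrite -subr_eq0 opprK addrC -big_split /=.
  by apply/eqP; exact: HA.
under eq_bigr => m _ do rewrite HD mulrN mulr_sumr.
rewrite sumrN exchange_big /=; congr (- _).
apply: eq_bigr => a _; apply: eq_bigr => m _.
ring.
Qed.

Lemma pull4 (F : 'I_n -> 'I_n -> 'I_n -> 'I_n -> 'I_n -> K) :
  \sum_(a < n) \sum_(b < n) \sum_(c < n) \sum_(d < n) \sum_(x < n) F a b c d x =
  \sum_(x < n) \sum_(a < n) \sum_(b < n) \sum_(c < n) \sum_(d < n) F a b c d x.
Proof.
under eq_bigr => a _ do under eq_bigr => b _ do under eq_bigr => c _ do rewrite exchange_big /=.
under eq_bigr => a _ do under eq_bigr => b _ do rewrite exchange_big /=.
under eq_bigr => a _ do rewrite exchange_big /=.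
by rewrite exchange_big.
Qed.

End Aux.

Section Aux2.
Variables (R : realType) (n : nat).
Local Notation V := 'rV[R]_(n + n).
Local Open Scope complex_scope.
Variable p : V.

Lemma cdv_big_sum (I : Type) (r : seq I) (P : pred I) (F : I -> V -> R[i]) :
  (forall i, cdv (F i) p) -> cdv (fun q => \sum_(i <- r | P i) F i q) p.
Proof.
move=> HF; elim: r => [|a r IH].
  have -> : (fun q => \sum_(i <- [::] | P i) F i q) = (fun _ => 0).
    by apply/funext => q; rewrite big_nil.
  exact: cdv_cst.
have -> : (fun q => \sum_(i <- a :: r | P i) F i q) =
  (fun q => (if P a then F a q else 0) + \sum_(i <- r | P i) F i q).
  by apply/funext => q; rewrite big_cons; case: (P a); rewrite ?add0r.
apply: cdv_D => //; case: (P a) => //; exact: cdv_cst.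
Qed.

Lemma cdv_big_prod (I : Type) (r : seq I) (P : pred I) (F : I -> V -> R[i]) :
  (forall i, cdv (F i) p) -> cdv (fun q => \prod_(i <- r | P i) F i q) p.
Proof.
move=> HF; elim: r => [|a r IH].
  have -> : (fun q => \prod_(i <- [::] | P i) F i q) = (fun _ => 1).
    by apply/funext => q; rewrite big_nil.
  exact: cdv_cst.
have -> : (fun q => \prod_(i <- a :: r | P i) F i q) =
  (fun q => (if P a then F a q else 1) * \prod_(i <- r | P i) F i q).
  by apply/funext => q; rewrite big_cons; case: (P a); rewrite ?mul1r.
apply: cdv_M => //; case: (P a) => //; exact: cdv_cst.
Qed.

Lemma cdv_det m (M : V -> 'M[R[i]]_m) :
  (forall a b, cdv (fun q => M q a b) p) -> cdv (fun q => \det (M q)) p.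
Proof.
move=> HM; rewrite /determinant.
apply: cdv_big_sum => s; apply: cdv_M; first exact: cdv_cst.
by apply: cdv_big_prod => a; apply: HM.
Qed.

Lemma conjc_i : conjc ('i : R[i]) = - 'i.
Proof. by apply: complex_ext; rewrite ?ReN ?ImN /= ?oppr0. Qed.

Lemma conjcM (x y : R[i]) : conjc (x * y) = conjc x * conjc y.
Proof. exact: rmorphM. Qed.
Lemma conjcB (x y : R[i]) : conjc (x - y) = conjc x - conjc y.
Proof. exact: rmorphB. Qed.
Lemma conjc_half : conjc ((2%:R : R[i])^-1) = (2%:R)^-1.
Proof. by rewrite conjc_inv conjc_nat. Qed.

Lemma dzb_J k F : cdv F p -> dzb k (fun q => conjc (F q)) p = conjc (dz k F p).
Proof.
move=> HF; rewrite /dzb /dz (cD_J _ HF) (cD_J _ HF).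
rewrite conjcM conjcB conjcM conjc_i conjc_half.
move: (conjc (cD (lshift n k) F p)) (conjc (cD (rshift n k) F p)) => x y.
by rewrite mulNr opprK.
Qed.

End Aux2.

Section Main.
Variables (R : realType) (n : nat).
Local Notation V := 'rV[R]_(n + n).
Local Open Scope complex_scope.
Variables (U : set V) (h : V -> 'M[R[i]]_n).
Hypothesis HU : open U.
Hypothesis Hh : hermitian_metric U h.
Variable p : V.
Hypothesis Up : U p.

Lemma nbhsU : \forall q \near p, U q.
Proof.
have : open_nbhs p U by split.
by rewrite open_nbhsE => -[].
Qed.

Lemma ball_U : exists2 r : R, 0 < r & forall q : V, `|q - p| < r -> U q.
Proof.
have /nbhs_ballP [r r0 Hr] := nbhsU.
exists r => // q hq; apply: Hr; rewrite -ball_normE /= distrC.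
exact: hq.
Qed.

Lemma csm_h a b : csm (hent h a b) p.
Proof.
have [r r0 Hr] := ball_U; exists r => // q hq s.
have Uq := Hr q hq; have [H1 H2] := (proj1 Hh) a b.
by split; [apply: H1 | apply: H2].
Qed.

Lemma cdv_h a b : cdv (fun q => h q a b) p.
Proof. exact: (csm_cdv (csm_h a b)). Qed.

Lemma herm_at q : U q -> forall a b, h q b a = conjc (h q a b).
Proof. by move=> Uq; have [H _] := (proj2 Hh) q Uq. Qed.

Lemma pd_at q : U q -> forall v : 'I_n -> R[i], (exists i, v i != 0) ->
  0 < \sum_(i < n) \sum_(j < n) h q i j * v i * conjc (v j).
Proof. by move=> Uq; have [_ H] := (proj2 Hh) q Uq. Qed.

Lemma unit_at q : U q -> h q \in unitmx.
Proof. by move=> Uq; exact: (H_unit (herm_at Uq) (pd_at Uq)). Qed.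

Lemma hup_near k l : \forall q \near p, hup h k l q =
   (\det (h q))^-1 * ((-1) ^+ (k + l) * \det (row' k (col' l (h q)))).
Proof.
near=> q.
have Uq : U q by near: q; exact: nbhsU.
by rewrite /hup /invmx (unit_at Uq) !mxE.
Unshelve. all: by end_near. Qed.

Lemma cdv_hup k l : cdv (hup h k l) p.
Proof.
apply: (@cdv_near _ _ _ (fun q => (\det (h q))^-1 *
   ((-1) ^+ (k + l) * \det (row' k (col' l (h q)))))).
  by near=> q; rewrite (near (hup_near k l) q).
apply: cdv_M.
  apply: cdv_V; first by apply: cdv_det => a b; exact: cdv_h.
  by rewrite -unitfE -unitmxE unit_at.
apply: cdv_M; first exact: cdv_cst.
apply: cdv_det => a b.
have -> : (fun q => row' k (col' l (h q)) a b) = (fun q => h q (lift k a) (lift l b)).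
  by apply/funext => q; rewrite !mxE.
exact: cdv_h.
Unshelve. all: by end_near. Qed.

Lemma hup_id q : U q -> forall k m,
  \sum_(l < n) hent h m l q * hup h k l q = (m == k)%:R.
Proof.
move=> Uq k m.
transitivity ((h q *m invmx (h q)) m k); first by rewrite mxE.
by rewrite mulmxV ?unit_at // mxE.
Qed.

Lemma hup_id2 l l' : \sum_(m < n) hup h m l' p * h p m l = (l == l')%:R.
Proof.
transitivity ((invmx (h p) *m h p) l' l); first by rewrite mxE.
by rewrite mulVmx ?unit_at // mxE eq_sym.
Qed.

Lemma wop_hup a b c k l' :
  wop a b c (hup h k l') p = - \sum_(x < n) \sum_(m < n)
     hup h k x p * wop a b c (hent h m x) p * hup h m l' p.
Proof.
apply: (@inv_deriv _ n (fun x y => hup h x y p) (fun x y => h p x y)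
   (fun m x => wop a b c (hent h m x) p) (fun x => wop a b c (hup h k x) p) k).
  by move=> l l0; exact: hup_id2.
move=> m.
have E : wop a b c (fun q => \sum_(l < n) hent h m l q * hup h k l q) p = 0.
  rewrite (@wop_near _ _ a b c p _ (fun _ => (m == k)%:R)); first exact: wop_cst.
  near=> q; apply: hup_id; near: q; exact: nbhsU.
rewrite wop_sum in E; last by move=> l; apply: cdv_M; [exact: cdv_h | exact: cdv_hup].
rewrite -[RHS]E; apply: eq_bigr => l _.
by rewrite wop_M //; [exact: cdv_h | exact: cdv_hup].
Unshelve. all: by end_near. Qed.

Definition Gp := fun a b => hup h a b p.
Definition Ap := fun a b c => dz c (hent h a b) p.
Definition Bp := fun a b c => dzb c (hent h a b) p.
Definition Cp := fun a b c d => dz c (dzb d (hent h a b)) p.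

Lemma dz_hup i k l : dz i (hup h k l) p = dGz Gp Ap i k l.
Proof.
rewrite dz_wop wop_hup /dGz; congr (- _).
apply: eq_bigr => x _; apply: eq_bigr => m _.
by rewrite /Ap dz_wop.
Qed.

Lemma dzb_hup j k l : dzb j (hup h k l) p = dGzb Gp Bp j k l.
Proof.
by rewrite dzb_wop wop_hup /dGzb.
Qed.

Lemma cdv_dz_h i a b : cdv (dz i (hent h a b)) p.
Proof.
have -> : dz i (hent h a b) = wop (lshift n i) (rshift n i) (-'i) (hent h a b).
  by apply/funext => q; exact: dz_wop.
by apply: cdv_wop; apply: csm_cdv_cD; apply: csm_h.
Qed.

Lemma cdv_dzb_h i a b : cdv (dzb i (hent h a b)) p.
Proof.
have -> : dzb i (hent h a b) = wop (lshift n i) (rshift n i) 'i (hent h a b).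
  by apply/funext => q.
by apply: cdv_wop; apply: csm_cdv_cD; apply: csm_h.
Qed.

Lemma B_conj a b c : Bp a b c = conjc (Ap b a c).
Proof.
rewrite /Bp /Ap -(dzb_J _ (csm_cdv (csm_h b a))).
rewrite !dzb_wop; apply: wop_near.
near=> q; have Uq : U q by near: q; exact: nbhsU.
by rewrite /hent (herm_at Uq b a).
Unshelve. all: by end_near. Qed.

Lemma mixed i j a b : dzb j (dz i (hent h a b)) p = dz i (dzb j (hent h a b)) p.
Proof.
rewrite dzb_wop dz_wop.
have -> : dz i (hent h a b) = wop (lshift n i) (rshift n i) (-'i) (hent h a b).
  by apply/funext => q; exact: dz_wop.
have -> : dzb j (hent h a b) = wop (lshift n j) (rshift n j) 'i (hent h a b).
  by apply/funext => q.
exact: (csm_wop_swap (csm_h a b)).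
Qed.

Lemma dzb_Gam i j k l : dzb j (Gam h i k l) p = dzbGamF Gp Ap Bp Cp j i k l.
Proof.
have Hc : forall m, cdv (fun q => hup h l m q * (dz i (hent h k m) q + dz k (hent h i m) q)) p.
  move=> m; apply: cdv_M; first exact: cdv_hup.
  by apply: cdv_D; exact: cdv_dz_h.
rewrite dzb_wop /Gam wop_Ml; last by apply: cdv_sum.
rewrite wop_sum //.
rewrite /dzbGamF; congr (_ * _); apply: eq_bigr => m _.
rewrite wop_M; [| exact: cdv_hup | by apply: cdv_D; exact: cdv_dz_h].
rewrite wop_D; [| exact: cdv_dz_h | exact: cdv_dz_h].
by rewrite -!dzb_wop dzb_hup !mixed.
Qed.

Lemma dz_Gamb i j k l : dz i (Gamb h j k l) p = dzGambF Gp Ap Bp Cp i j k l.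
Proof.
have Hc : forall m, cdv (fun q => hup h l m q * (dzb j (hent h k m) q - dzb m (hent h k j) q)) p.
  move=> m; apply: cdv_M; first exact: cdv_hup.
  by apply: cdv_B; exact: cdv_dzb_h.
rewrite dz_wop /Gamb wop_Ml; last by apply: cdv_sum.
rewrite wop_sum //.
rewrite /dzGambF; congr (_ * _); apply: eq_bigr => m _.
rewrite wop_M; [| exact: cdv_hup | by apply: cdv_B; exact: cdv_dzb_h].
rewrite wop_B; [| exact: cdv_dzb_h | exact: cdv_dzb_h].
by rewrite -!dz_wop dz_hup.
Qed.

Lemma R1_E i j : R1 h i j p = R1F Gp Ap Bp Cp i j.
Proof.
rewrite /R1 /R1F; apply: eq_bigr => k _.
by rewrite /Rc /RcF dzb_Gam dz_Gamb.
Qed.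

Lemma M_E i j : Theta2 h i j p - (2%:R * R1 h i j p - Theta1 h i j p) =
  QF Gp Ap Bp i j - Lambda_ddbar h i j p.
Proof. rewrite R1_E; exact: (identity Gp Ap Bp Cp i j). Qed.

Definition Tt i k m := Ap k m i - Ap i m k.

Lemma QF_T i j : QF Gp Ap Bp i j = \sum_(k < n) \sum_(l < n) \sum_(q < n) \sum_(m < n)
   Gp k l * Gp q m * Tt i k m * conjc (Tt j l q).
Proof.
rewrite /QF; apply: eq_bigr => k _; apply: eq_bigr => l _.
apply: eq_bigr => q _; apply: eq_bigr => m _.
by rewrite /Tt !B_conj conjcB.
Qed.

Lemma cE (z : R[i]) : conjC z = conjc z.
Proof. by []. Qed.

Lemma QF_ii i : QF Gp Ap Bp i i = Phi (h p) (Tt i).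
Proof.
rewrite QF_T /Phi; apply: eq_bigr => k _; apply: eq_bigr => l _.
by apply: eq_bigr => q _; apply: eq_bigr => m _; rewrite cE.
Qed.

Lemma QF_psd (v : 'I_n -> R[i]) :
  \sum_(i < n) \sum_(j < n) QF Gp Ap Bp i j * v i * conjc (v j) =
  Phi (h p) (fun k m => \sum_(i < n) v i * Tt i k m).
Proof.
transitivity (\sum_(i < n) \sum_(j < n) \sum_(k < n) \sum_(l < n) \sum_(q < n) \sum_(m < n)
   (Gp k l * Gp q m * (v i * Tt i k m) * conjc (v j * Tt j l q))).
  apply: eq_bigr => i _; apply: eq_bigr => j _.
  rewrite QF_T !mulr_suml; apply: eq_bigr => k _.
  rewrite !mulr_suml; apply: eq_bigr => l _.
  rewrite !mulr_suml; apply: eq_bigr => q _.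
  rewrite !mulr_suml; apply: eq_bigr => m _.
  rewrite conjcM.
  move: (Gp k l) (Gp q m) (Tt i k m) (conjc (Tt j l q)) (v i) (conjc (v j)) => x1 x2 x3 x4 x5 x6.
  by ring.
rewrite /Phi.
have -> : \sum_(k < n) \sum_(l < n) \sum_(q < n) \sum_(m < n)
   invmx (h p) l k * invmx (h p) m q * (\sum_(i < n) v i * Tt i k m) *
   conjC (\sum_(i < n) v i * Tt i l q) =
   \sum_(k < n) \sum_(l < n) \sum_(q < n) \sum_(m < n) \sum_(i < n) \sum_(j < n)
   (Gp k l * Gp q m * (v i * Tt i k m) * conjc (v j * Tt j l q)).
  apply: eq_bigr => k _; apply: eq_bigr => l _.
  apply: eq_bigr => q _; apply: eq_bigr => m _.
  rewrite cE rmorph_sum -mulrA big_distrlr mulr_sumr; apply: eq_bigr => i _.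
  by rewrite mulr_sumr; apply: eq_bigr => j _; rewrite /= !mulrA.
rewrite (pull4 (fun k l q m i => \sum_(j < n)
   (Gp k l * Gp q m * (v i * Tt i k m) * conjc (v j * Tt j l q)))).
apply: eq_bigr => i _.
by rewrite (pull4 (fun k l q m j =>
   (Gp k l * Gp q m * (v i * Tt i k m) * conjc (v j * Tt j l q)))).
Qed.

Lemma Tt_kahler : (forall i j k, dz k (hent h i j) p = dz i (hent h k j) p) ->
  forall i k m, Tt i k m = 0.
Proof. by move=> Hk i k m; rewrite /Tt /Ap (Hk k m i) subrr. Qed.

Lemma QF_zero : (forall i k m, Tt i k m = 0) -> forall i j, QF Gp Ap Bp i j = 0.
Proof.
move=> HT i j; rewrite QF_T; apply: big1 => k _; apply: big1 => l _.
apply: big1 => q _; apply: big1 => m _.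
by rewrite HT mulr0 mul0r.
Qed.

End Main.


Unset Implicit Arguments.
Local Open Scope complex_scope.

Theorem lemma4p2 (R : realType) (n : nat) (U : set 'rV[R]_(n + n))
  (h : 'rV[R]_(n + n) -> 'M[R[i]]_n) :
  open U -> hermitian_metric U h -> Lddbar_zero U h ->
  (forall p, U p ->
     psd (fun i j => Theta2 h i j p - (2%:R * R1 h i j p - Theta1 h i j p))) /\
  ((forall p, U p -> forall i j : 'I_n,
      2%:R * R1 h i j p - Theta1 h i j p = Theta2 h i j p)
   <-> kahler_on U h).
Proof.
move=> HU Hh HL; split.
  move=> p Up v.
  have -> : \sum_(i < n) \sum_(j < n)
      (Theta2 h i j p - (2%:R * R1 h i j p - Theta1 h i j p)) * v i * conjc (v j) =
    \sum_(i < n) \sum_(j < n) QF (Gp h p) (Ap h p) (Bp h p) i j * v i * conjc (v j).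
    apply: eq_bigr => i _; apply: eq_bigr => j _.
    by rewrite (M_E HU Hh Up) (HL p Up i j) subr0.
  rewrite (QF_psd HU Hh Up).
  exact: (Phi_ge0 (herm_at Hh Up) (pd_at Hh Up)).
split.
  move=> Heq p Up.
  have HT : forall i k m, Tt h p i k m = 0.
    move=> i; apply: (Phi_eq0 (herm_at Hh Up) (pd_at Hh Up)).
    rewrite -(QF_ii HU Hh Up).
    have := M_E HU Hh Up i i.
    by rewrite (HL p Up i i) subr0 (Heq p Up i i) subrr => <-.
  have K1 : forall i j k, dz k (hent h i j) p = dz i (hent h k j) p.
    move=> i j k; apply/eqP; rewrite -subr_eq0; apply/eqP.
    exact: (HT k i j).
  move=> i j k; split; first exact: K1.
  rewrite -[dzb k (hent h i j) p]/(Bp h p i j k) -[dzb j (hent h i k) p]/(Bp h p i k j).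
  by rewrite !(B_conj HU Hh Up) /Ap (K1 j i k).
move=> Hk p Up i j.
apply/eqP; rewrite eq_sym -subr_eq0; apply/eqP.
rewrite (M_E HU Hh Up) (HL p Up i j) subr0.
apply: (QF_zero HU Hh Up (Tt_kahler _)) => i' j' k'.
by have [-> _] := Hk p Up i' j' k'.
Qed.
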